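(* Every function $\pi_{3,5}$ has maximum distortion at least $3$.
   Context: For positive integers $n,k$, let $\mathcal S_{n,k}$ be the set of all multisets of size $n$ with elements from $[k]=\{1,\dots,k\}$. A function $\pi_{n,k}$ assigns to each $S\in\mathcal S_{n,k}$ a string $\pi_{n,k}(S)$ of length $n$ (positions indexed by $[n]$) whose letters, counted with multiplicity, form exactly the multiset $S$. For strings $X,Y$ of equal length, $d(X,Y)$ denotes their Hamming distance. For multisets $A,B$, the symmetric difference $A\oplus B$ is the multiset obtained by removing from $A$ and from $B$ their maximal common sub-multiset and taking the union of what remains. A pair $S,S'\in\mathcal S_{n,k}$ with $|S\oplus S'|=2$ has distortion $d(\pi_{n,k}(S),\pi_{n,k}(S'))$; the maximum distortion of $\pi_{n,k}$ is the maximum distortion over all such pairs. *)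

(* Defs.v *)
From mathcomp Require Import all_boot.
Set Implicit Arguments. Unset Strict Implicit. Unset Printing Implicit Defensive.

(* The alphabet [k] = {1,...,k} is represented by 'I_k = {0,...,k-1}. *)

(* A multiset over [k] is its multiplicity function; S_{n,k} = multisets of size n. *)
Definition mset (n k : nat) := {m : {ffun 'I_k -> nat} | \sum_(i < k) m i == n}.

Definition letters (n k : nat) (w : n.-tuple 'I_k) : {ffun 'I_k -> nat} :=
  [ffun i => count_mem i w].

(* |A (+) B|: remove the maximal common sub-multiset (pointwise min) from both
   and count what remains: sum_i (A i - min) + (B i - min). *)
Definition symdiff_size (k : nat) (A B : {ffun 'I_k -> nat}) : nat :=
  \sum_(i < k) ((A i - minn (A i) (B i)) + (B i - minn (A i) (B i))).

Definition hamming (n k : nat) (X Y : n.-tuple 'I_k) : nat :=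
  \sum_(i < n) (tnth X i != tnth Y i).

Definition valid_pi (n k : nat) (pi : mset n k -> n.-tuple 'I_k) : Prop :=
  forall S : mset n k, letters (pi S) = val S.

Definition max_distortion_ge (n k : nat) (pi : mset n k -> n.-tuple 'I_k) (d : nat) : Prop :=
  exists S S' : mset n k,
    symdiff_size (val S) (val S') = 2 /\ d <= hamming (pi S) (pi S').

(* Main.v *)
Require Import Defs.
From mathcomp Require Import all_boot.
Set Implicit Arguments. Unset Strict Implicit. Unset Printing Implicit Defensive.

Definition ords5 : seq 'I_5 := [:: @Ordinal 5 0 isT; @Ordinal 5 1 isT; @Ordinal 5 2 isT; @Ordinal 5 3 isT; @Ordinal 5 4 isT].
Definition ords3 : seq 'I_3 := [:: @Ordinal 3 0 isT; @Ordinal 3 1 isT; @Ordinal 3 2 isT].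

Lemma sum5 (F : 'I_5 -> nat) : \sum_(i < 5) F i = sumn (map F ords5).
Proof.
rewrite !big_ord_recl big_ord0 /= addn0.
by rewrite addn0; repeat (congr (_ + _)); congr F; apply: val_inj.
Qed.
Lemma sum3 (F : 'I_3 -> nat) : \sum_(i < 3) F i = sumn (map F ords3).
Proof.
rewrite !big_ord_recl big_ord0 /= addn0.
by rewrite addn0; repeat (congr (_ + _)); congr F; apply: val_inj.
Qed.
Lemma mem5 (i : 'I_5) : i \in ords5.
Proof. by case: i => [[|[|[|[|[|//]]]]] Hi]; rewrite -(mem_map val_inj). Qed.

Lemma sum_count k (s : seq 'I_k) : \sum_(i < k) count_mem i s = size s.
Proof.
elim: s => [|x s IH] /=; first by rewrite big1.
rewrite big_split /= IH (bigD1 x) //= eqxx big1 ?add1n ?addn0 // => i.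
by rewrite eq_sym => /negbTE ->.
Qed.

Lemma sum_letters n k (w : n.-tuple 'I_k) : \sum_(i < k) letters w i == n.
Proof.
apply/eqP; rewrite -[RHS](size_tuple w) -sum_count.
by apply: eq_bigr => i _; rewrite ffunE.
Qed.

Definition T := 3.-tuple 'I_5.
Definition M (t : T) : mset 3 5 := exist _ (letters t) (sum_letters t).

Definition sdc (t t' : T) : nat :=
  sumn [seq (count_mem i t - minn (count_mem i t) (count_mem i t')) +
            (count_mem i t' - minn (count_mem i t) (count_mem i t')) | i <- ords5].
Lemma sdE t t' : symdiff_size (letters t) (letters t') = sdc t t'.
Proof. by rewrite /symdiff_size sum5 /sdc; congr sumn; apply: eq_map => i; rewrite !ffunE. Qed.

Definition hm (X Y : T) : nat := sumn [seq nat_of_bool (tnth X i != tnth Y i) | i <- ords3].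
Lemma hmE X Y : hamming X Y = hm X Y.
Proof. by rewrite /hamming sum3. Qed.

Definition adj (t t' : T) := sdc t t' == 2.

Definition alltup : seq T :=
  flatten (map (fun a => flatten (map (fun b => map (fun c => [tuple a; b; c]) ords5) ords5)) ords5).
Definition cands (t : T) :=
  filter (fun u : T => all (fun i => count_mem i u == count_mem i t) ords5) alltup.

Lemma in_alltup (u : T) : u \in alltup.
Proof.
have -> : u = [tuple tnth u (@Ordinal 3 0 isT); tnth u (@Ordinal 3 1 isT); tnth u (@Ordinal 3 2 isT)].
  apply: eq_from_tnth => i; rewrite [RHS](tnth_nth (tnth u i)) /=.
  by case: i => [[|[|[|//]]] Hi] /=; congr tnth; apply: val_inj.
apply/flattenP; eexists; first by apply/mapP; eexists; [exact: mem5|reflexivity].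
apply/flattenP; eexists; first by apply/mapP; eexists; [exact: mem5|reflexivity].
by apply/mapP; eexists; [exact: mem5|reflexivity].
Qed.

Lemma in_cands (u t : T) : letters u = letters t -> u \in cands t.
Proof.
move=> E; rewrite mem_filter in_alltup andbT; apply/allP => i _.
by move/ffunP: E => /(_ i); rewrite !ffunE => ->.
Qed.

Definition cons_ (m s : T) (asg : seq (T * T)) :=
  all (fun x => adj m x.1 ==> (hm s x.2 <= 2)) asg.

Fixpoint search (order : seq T) asg : bool :=
  match order with
  | [::] => false
  | m :: o => all (fun s => if cons_ m s asg then search o ((m, s) :: asg) else true) (cands m)
  end.

Lemma search_sound (p : T -> T) order asg :
  search order asg ->
  (forall x, x \in asg -> p x.1 = x.2) ->
  (forall t, p t \in cands t) ->
  (forall t t', adj t t' -> hm (p t) (p t') <= 2) -> False.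
Proof.
elim: order asg => [|m o IH] asg //= /allP Hs Hasg Hc Hadj.
have := Hs _ (Hc m); case: ifP => [_ Hr|/negbT Hn _].
  apply: (IH _ Hr) => // x; rewrite inE => /orP [/eqP -> //|]; exact: Hasg.
move/allP: Hn => [] [x1 x2] Hx /=; apply/implyP => Ha.
by have /= <- := Hasg _ Hx; apply: Hadj.
Qed.

Definition mk (x : nat * nat * nat) : T :=
  let '(a, b, c) := x in [tuple nth ord0 ords5 a; nth ord0 ords5 b; nth ord0 ords5 c].

Definition order := map mk [:: (0,1,2); (0,1,3); (0,1,4); (0,2,3); (0,2,4); (0,3,4); (1,2,3); (1,2,4); (1,3,4); (2,3,4); (0,0,1); (0,0,2); (0,0,3); (0,0,4); (0,1,1); (0,2,2); (0,3,3); (0,4,4); (1,1,2); (1,1,3); (1,1,4); (1,2,2); (1,3,3); (1,4,4); (2,2,3); (2,2,4); (2,3,3); (2,4,4); (3,3,4); (3,4,4); (0,0,0); (1,1,1); (2,2,2); (3,3,3); (4,4,4)].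

Lemma search_ok : search order [::].
Proof. Time vm_compute. reflexivity. Qed.

From Stdlib Require Import Classical.

Theorem theorem3p1 (pi : mset 3 5 -> 3.-tuple 'I_5) :
  valid_pi pi -> max_distortion_ge pi 3.
Proof.
move=> V; apply: NNPP => H.
apply: (@search_sound (fun t => pi (M t)) order [::] search_ok) => // [t|t t' Ha].
  by apply: in_cands; rewrite V.
rewrite -hmE leqNgt; apply/negP => Hlt; apply: H; exists (M t), (M t').
by rewrite /= sdE (eqP Ha).
Qed.
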